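(* Fix integers $n,L\ge1$ and $\delta>0$. Consider the $L$-layer linear Transformer acting on $Z_l\in\mathbb{R}^{3n\times n}$ by $$Z_{l+1}=Z_l+W^V_l Z_l Z_l^\top (W^Q_l)^\top W^K_l Z_l+W^R_l Z_l,$$ with weights $W^V_l,W^Q_l,W^K_l,W^R_l\in\mathbb{R}^{3n\times 3n}$, and for a graph Laplacian $\mathcal{L}\in\mathbb{R}^{n\times n}$ let the input be $Z_0^\top=\begin{bmatrix}(\hat I_{n\times n}-\delta\mathcal{L}), & I_{n\times n}, & \delta I_{n\times n}\end{bmatrix}$. Then there exists a choice of the weights such that for every connected graph on $n$ vertices whose Laplacian has smallest nonzero eigenvalue $\lambda_{\min}$ and largest eigenvalue $\lambda_{\max}\le1/\delta$, $$\left\|[Z_L]_{2n+1\ldots3n}-\mathcal{L}^\dagger\right\|_2\le\frac{1}{\lambda_{\min}}\exp\!\left(-\delta 2^{L}\lambda_{\min}\right).$$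
   Context: A graph has $n$ vertices, $d$ edges and positive edge resistances $r_j$; graphs are connected. With an arbitrary edge orientation, the incidence matrix $B\in\mathbb{R}^{n\times d}$ has $B_{ij}=\mp1/\sqrt{r_j}$ if $e_j$ leaves/enters vertex $i$ and $0$ otherwise, and $\mathcal{L}=BB^\top$. $\mathcal{L}^\dagger$ is the pseudoinverse, $\hat I_{n\times n}=I_{n\times n}-\frac1n\vec1\vec1^\top$, and $[Z]_{a\ldots b}$ denotes the submatrix of rows $a$ through $b$ of $Z$. $\|\cdot\|_2$ is the spectral norm. *)

(* Defs.v *)
From HB Require Import structures.
From mathcomp Require Import all_boot all_order all_algebra.
From mathcomp Require Import boolp classical_sets reals sequences exp.
Set Implicit Arguments.
Unset Strict Implicit.
Unset Printing Implicit Defensive.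
Import Order.TTheory GRing.Theory Num.Theory.
Local Open Scope ring_scope.

Section Defs.
Variable R : realType.

(* A graph on n vertices with d edges: edge j goes from vertex src j to
   vertex tgt j (arbitrary orientation), with resistance r j. *)
Definition edges_ok (n d : nat) (src tgt : 'I_d -> 'I_n) (r : 'I_d -> R) :=
  (forall j, src j != tgt j) /\ (forall j, 0 < r j).

Definition adj (n d : nat) (src tgt : 'I_d -> 'I_n) : rel 'I_n :=
  fun u v => [exists j, ((src j == u) && (tgt j == v)) || ((src j == v) && (tgt j == u))].

Definition graph_connected (n d : nat) (src tgt : 'I_d -> 'I_n) :=
  forall u v : 'I_n, connect (adj src tgt) u v.

Definition incidence (n d : nat) (src tgt : 'I_d -> 'I_n) (r : 'I_d -> R)
  : 'M[R]_(n, d) :=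
  \matrix_(i, j) (if i == src j then - (Num.sqrt (r j))^-1
                  else if i == tgt j then (Num.sqrt (r j))^-1 else 0).

Definition laplacian (n d : nat) (src tgt : 'I_d -> 'I_n) (r : 'I_d -> R)
  : 'M[R]_n := incidence src tgt r *m (incidence src tgt r)^T.

Definition is_pinv (n : nat) (A P : 'M[R]_n) :=
  [/\ A *m P *m A = A, P *m A *m P = P,
      (A *m P)^T = A *m P & (P *m A)^T = P *m A].

Definition Ihat (n : nat) : 'M[R]_n := 1%:M - (n%:R)^-1 *: const_mx 1.

Definition is_min_nonzero_eig (n : nat) (A : 'M[R]_n) (l : R) :=
  [/\ l != 0, eigenvalue A l & forall a, eigenvalue A a -> a != 0 -> l <= a].

Definition is_max_eig (n : nat) (A : 'M[R]_n) (l : R) :=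
  eigenvalue A l /\ forall a, eigenvalue A a -> a <= l.

Definition vnorm (n : nat) (x : 'cV[R]_n) : R := Num.sqrt (\sum_i x i 0 ^+ 2).

Definition spec_norm (m n : nat) (A : 'M[R]_(m, n)) : R :=
  sup [set vnorm (A *m x) | x in [set x : 'cV[R]_n | vnorm x = 1]]%classic.

Definition tf_layer (m n : nat) (WV WQ WK WR : 'M[R]_m) (Z : 'M[R]_(m, n))
  : 'M[R]_(m, n) :=
  Z + WV *m Z *m Z^T *m WQ^T *m WK *m Z + WR *m Z.

Fixpoint tf (m n : nat) (WV WQ WK WR : nat -> 'M[R]_m) (k : nat)
  (Z0 : 'M[R]_(m, n)) : 'M[R]_(m, n) :=
  match k with
  | 0 => Z0
  | k'.+1 => tf_layer (WV k') (WQ k') (WK k') (WR k') (tf WV WQ WK WR k' Z0)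
  end.

Definition Z0 (n : nat) (delta : R) (Lap : 'M[R]_n) : 'M[R]_(n + n + n, n) :=
  col_mx (col_mx (Ihat n - delta *: Lap)^T 1%:M) (delta *: 1%:M)^T.

End Defs.

(* Main.v *)
Require Import Defs.
From HB Require Import structures.
From mathcomp Require Import all_boot all_order all_algebra.
From mathcomp Require Import boolp classical_sets reals sequences exp.
From mathcomp Require Import complex spectral sesquilinear.
Import Order.TTheory GRing.Theory Num.Theory.
Local Open Scope ring_scope.

Section Lap.
Variables (R : realType) (n d : nat) (src tgt : 'I_d -> 'I_n) (r : 'I_d -> R).
Hypothesis Hok : edges_ok src tgt r.
Local Notation B := (incidence src tgt r).
Local Notation Lp := (laplacian src tgt r).
Local Notation J := (const_mx 1 : 'M[R]_n).

Lemma lap_sym : Lp^T = Lp.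
Proof. by rewrite /laplacian trmx_mul trmxK. Qed.

Lemma sumB (f : 'I_n -> R) j :
  \sum_i f i * B i j = (f (tgt j) - f (src j)) / Num.sqrt (r j).
Proof.
have ne : tgt j != src j by rewrite eq_sym; case: Hok => H _; apply: H.
rewrite (bigD1 (src j)) //= (bigD1 (tgt j)) //= big1 ?addr0.
  by rewrite !mxE eqxx (negbTE ne) eqxx mulrN mulrBl addrC.
by move=> i /andP[n1 n2]; rewrite mxE (negbTE n1) (negbTE n2) mulr0.
Qed.

Lemma JL : J *m Lp = 0.
Proof.
rewrite /laplacian mulmxA.
have -> : const_mx 1 *m B = 0 :> 'M[R]_(n, d).
  apply/matrixP => i j; rewrite !mxE.
  under eq_bigr do rewrite mxE.
  by rewrite (sumB (fun _ => 1)) subrr mul0r.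
by rewrite mul0mx.
Qed.

Lemma LJ : Lp *m J = 0.
Proof.
by apply: trmx_inj; rewrite trmx_mul trmx_const lap_sym JL trmx0.
Qed.

Lemma quadL (a : 'rV[R]_n) :
  (a *m Lp *m a^T) 0 0 = \sum_j ((a 0 (tgt j) - a 0 (src j)) / Num.sqrt (r j)) ^+ 2.
Proof.
rewrite /laplacian !mulmxA -mulmxA -trmx_mul mxE.
have E j : (a *m B) 0 j = (a 0 (tgt j) - a 0 (src j)) / Num.sqrt (r j).
  by rewrite mxE sumB.
have T j : (a *m B)^T j 0 = (a *m B) 0 j by rewrite mxE.
by apply: eq_bigr => j _; rewrite T E expr2.
Qed.

Lemma quadL_ge0 (a : 'rV[R]_n) : 0 <= (a *m Lp *m a^T) 0 0.
Proof. by rewrite quadL sumr_ge0 // => j _; rewrite sqr_ge0. Qed.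

Lemma eig_ge0 e : eigenvalue Lp e -> 0 <= e.
Proof.
move=> /eigenvalueP [v Hv vn0].
have := quadL_ge0 v; rewrite Hv -scalemxAl mxE.
have : 0 < (v *m v^T) 0 0.
  rewrite mxE; under eq_bigr do rewrite mxE -expr2.
  have [i /eqP vi] : exists i, v 0 i != 0.
    apply/existsP; apply: contraR vn0; rewrite negb_exists => /forallP H.
    by apply/eqP/matrixP => x y; rewrite ord1 mxE; apply/eqP/negPn/H.
  rewrite (bigD1 i) //= ltr_wpDr ?sumr_ge0 // => [k _|]; first by rewrite sqr_ge0.
  by rewrite exprn_even_gt0 //; apply/eqP.
by move=> pos; rewrite pmulr_lge0.
Qed.

Lemma edge_eq (a : 'rV[R]_n) : a *m Lp = 0 -> forall j, a 0 (src j) = a 0 (tgt j).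
Proof.
move=> H j; have := quadL a; rewrite H mul0mx mxE => /esym/psumr_eq0P H2.
have := H2 (fun j _ => sqr_ge0 _) j isT => /eqP; rewrite sqrf_eq0 mulf_eq0.
case/orP; first by rewrite subr_eq0 => /eqP->.
rewrite invr_eq0 sqrtr_eq0 => Hr; case: Hok => _ /(_ j) Hp.
by move: (lt_le_trans Hp Hr); rewrite ltxx.
Qed.

Lemma ker_const (Hc : graph_connected src tgt) (a : 'rV[R]_n) :
  a *m Lp = 0 -> forall u v, a 0 u = a 0 v.
Proof.
move=> H u v; have He := @edge_eq a H.
have cl : fingraph.closed (adj src tgt) [pred w | a 0 w == a 0 u].
  move=> x y /existsP [j /orP [/andP [/eqP <- /eqP <-]|/andP [/eqP <- /eqP <-]]];
    by rewrite !inE He.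
have := closed_connect cl (Hc u v); rewrite !inE eqxx => /esym/eqP.
by [].
Qed.

End Lap.

Section Spec.
Local Open Scope sesquilinear_scope.
Variable R : realType.
Local Notation C := (R[i]).
Local Notation RC := (real_complex R).

Lemma Re_add (x y : C) : complex.Re (x + y) = complex.Re x + complex.Re y.
Proof. by case: x; case: y. Qed.
Lemma Im_add (x y : C) : complex.Im (x + y) = complex.Im x + complex.Im y.
Proof. by case: x; case: y. Qed.
Lemma Re_sum I (s : seq I) (P : pred I) (F : I -> C) :
  complex.Re (\sum_(i <- s | P i) F i) = \sum_(i <- s | P i) complex.Re (F i).
Proof. by apply: (big_morph _ Re_add). Qed.
Lemma Im_sum I (s : seq I) (P : pred I) (F : I -> C) :
  complex.Im (\sum_(i <- s | P i) F i) = \sum_(i <- s | P i) complex.Im (F i).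
Proof. by apply: (big_morph _ Im_add). Qed.
Lemma Re_mulr (z : C) (x : R) : complex.Re (z * RC x) = complex.Re z * x.
Proof. by case: z => a b /=; rewrite mulr0 subr0. Qed.
Lemma Im_mulr (z : C) (x : R) : complex.Im (z * RC x) = complex.Im z * x.
Proof. by case: z => a b /=; rewrite mulr0 add0r. Qed.
Lemma Re_mull (z : C) (x : R) : complex.Re (RC x * z) = x * complex.Re z.
Proof. by case: z => a b /=; rewrite mul0r subr0. Qed.
Lemma Im_mull (z : C) (x : R) : complex.Im (RC x * z) = x * complex.Im z.
Proof. by case: z => a b /=; rewrite mul0r addr0. Qed.
Lemma conj_real (x : R) : Num.conj (RC x) = RC x.
Proof. exact: conjc_real. Qed.
Lemma conjM (x y : C) : Num.conj (x * y) = Num.conj x * Num.conj y.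
Proof. exact: rmorphM. Qed.
Lemma conj_mul_self (z : C) :
  Num.conj z * z = RC (complex.Re z ^+ 2 + complex.Im z ^+ 2).
Proof. by rewrite add_Re2_Im2 normCK mulrC. Qed.

Variable n : nat.

Lemma spec_real (M : 'M[R]_n) : M^T = M ->
  exists (dd : 'I_n -> R) (p q : 'I_n -> 'rV[R]_n),
   [/\ forall i, p i *m M = dd i *: p i,
       forall i, q i *m M = dd i *: q i &
       forall (a b : R) (y : 'cV[R]_n),
         let z := (a%:M + b *: M) *m y in
         (z^T *m z) 0 0 = \sum_i (((p i *m y) 0 0)^+2 + ((q i *m y) 0 0)^+2)
                              * (a + b * dd i)^+2 ].
Proof.
move=> Msym.
pose Mc := map_mx RC M.
have Mh : Mc \is hermsymmx.
  apply/is_hermitianmxP; rewrite expr0 scale1r; apply/matrixP => i j.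
  by rewrite !mxE conj_real -[in RHS]Msym mxE.
pose P := spectralmx Mc; pose D := spectral_diag Mc.
have U1 : P *m P^t* = 1%:M by apply/unitarymxP/spectral_unitarymx.
have Pu : P \in unitmx by apply: spectral_unit.
have U2 : P^t* *m P = 1%:M.
  by rewrite -invmx_unitary ?spectral_unitarymx // mulVmx.
have Dec : Mc = P^t* *m diag_mx D *m P.
  rewrite -invmx_unitary ?spectral_unitarymx //.
  by apply/orthomx_spectralP/hermitian_normalmx.
pose dd i := complex.Re (D 0 i).
have Dr i : D 0 i = RC (dd i).
  have /mxOverP := hermitian_spectral_diag_real Mh.
  by move=> /(_ 0 i) Hr; rewrite /dd RRe_real.
have Eig : P *m Mc = diag_mx D *m P.
  by rewrite Dec !mulmxA U1 mul1mx.
have EigE i j : \sum_k P i k * RC (M k j) = RC (dd i) * P i j.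
  move/matrixP: Eig => /(_ i j); rewrite mul_diag_mx !mxE -Dr => <-.
  by apply: eq_bigr => k _; rewrite mxE.
exists dd, (fun i => \row_k complex.Re (P i k)), (fun i => \row_k complex.Im (P i k)).
split.
- move=> i; apply/rowP => j; rewrite !mxE.
  have := congr1 (@complex.Re R) (EigE i j); rewrite Re_sum Re_mull => <-.
  by apply: eq_bigr => k _; rewrite mxE Re_mulr.
- move=> i; apply/rowP => j; rewrite !mxE.
  have := congr1 (@complex.Im R) (EigE i j); rewrite Im_sum Im_mull => <-.
  by apply: eq_bigr => k _; rewrite mxE Im_mulr.
move=> a b y z.
apply: (@complexI R).
pose yc := map_mx RC y; pose w := P *m yc.
pose G := (RC a)%:M + RC b *: diag_mx D.
pose v := G *m w.
have zc : map_mx RC z = P^t* *m v.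
  rewrite /z /v /w map_mxM map_mxD map_scalar_mx map_mxZ -/Mc Dec !mulmxA.
  congr (_ *m _).
  rewrite /G mulmxDr mulmxDl mul_mx_scalar -scalemxAl U2 scalemx1.
  by rewrite -scalemxAr -scalemxAl.
have L1 : RC ((z^T *m z) 0 0) = ((map_mx RC z)^t* *m map_mx RC z) 0 0.
  rewrite !mxE rmorph_sum; apply: eq_bigr => k _.
  by rewrite !mxE rmorphM conj_real.
rewrite L1 zc trmx_mul map_mxM trmxCK mulmxA -[_ *m P *m _]mulmxA U1 mulmx1.
have ve i : v i 0 = RC (a + b * dd i) * w i 0.
  rewrite /v /G mulmxDl mul_scalar_mx -scalemxAl mul_diag_mx !mxE Dr.
  by rewrite rmorphD rmorphM mulrDl mulrA.
have we i : w i 0 = \sum_k P i k * RC (y k 0).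
  by rewrite /w mxE; apply: eq_bigr => k _; rewrite mxE.
rewrite mxE rmorph_sum; apply: eq_bigr => i _.
have vt : (v^t*) 0 i = Num.conj (v i 0) by rewrite !mxE.
rewrite vt ve conjM conj_real mulrACA conj_mul_self -rmorphM mulrC -expr2.
rewrite [in RHS]rmorphM; congr (_ * _); apply: congr1.
rewrite we Re_sum Im_sum !mxE; congr (_ ^+ 2 + _ ^+ 2).
  by apply: eq_bigr => k _; rewrite !mxE Re_mulr.
by apply: eq_bigr => k _; rewrite !mxE Im_mulr.
Qed.

End Spec.

Definition ss {R : realType} {n} (y : 'cV[R]_n) := (y^T *m y) 0 0.

Section GS.
Variables (R : realType) (n d : nat) (src tgt : 'I_d -> 'I_n) (r : 'I_d -> R).
Hypothesis Hok : edges_ok src tgt r.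
Hypothesis Hc : graph_connected src tgt.
Local Notation Lp := (laplacian src tgt r).
Variables lmin lmax : R.
Hypothesis Hmin : is_min_nonzero_eig Lp lmin.
Hypothesis Hmax : is_max_eig Lp lmax.

Lemma eig_bound (u : 'rV[R]_n) (e : R) (y : 'cV[R]_n) :
  \sum_k y k 0 = 0 -> u *m Lp = e *: u -> (u *m y) 0 0 != 0 -> lmin <= e <= lmax.
Proof.
move=> Hy Hu Huy.
have un0 : u != 0 by apply: contraNneq Huy => ->; rewrite mul0mx mxE.
have ev : eigenvalue Lp e by apply/eigenvalueP; exists u.
have [k0 _] : exists k0 : 'I_n, u 0 k0 != 0.
  apply/existsP; apply: contraR un0; rewrite negb_exists => /forallP H.
  by apply/eqP/matrixP => x z; rewrite ord1 mxE; apply/eqP/negPn/H.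
have e0 : e != 0.
  apply: contraNneq Huy => e0; rewrite e0 scale0r in Hu.
  have Hk := @ker_const R n d src tgt r Hok Hc u Hu.
  rewrite mxE; under eq_bigr => k _ do rewrite (Hk k k0).
  by rewrite -mulr_sumr Hy mulr0.
case: Hmin => _ _ H1; case: Hmax => _ H2.
by rewrite H1 // H2.
Qed.

Lemma graph_spec (y : 'cV[R]_n) : \sum_k y k 0 = 0 ->
  exists c dd : 'I_n -> R,
    [/\ forall i, 0 <= c i, forall i, c i != 0 -> lmin <= dd i <= lmax &
        forall a b, ss ((a%:M + b *: Lp) *m y) = \sum_i c i * (a + b * dd i) ^+ 2].
Proof.
move=> Hy.
have [dd [p [q [Hp Hq Hn]]]] := @spec_real R n _ (@lap_sym R n d src tgt r).
exists (fun i => ((p i *m y) 0 0)^+2 + ((q i *m y) 0 0)^+2), dd; split.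
- by move=> i; rewrite addr_ge0 ?sqr_ge0.
- move=> i Hi; have [Hpy|Hpy] := boolP ((p i *m y) 0 0 != 0).
    exact: (@eig_bound _ _ y Hy (Hp i) Hpy).
  have [Hqy|Hqy] := boolP ((q i *m y) 0 0 != 0).
    exact: (@eig_bound _ _ y Hy (Hq i) Hqy).
  by move: Hi; move: Hpy Hqy; rewrite !negbK => Hpy Hqy; rewrite (eqP Hpy) (eqP Hqy) expr0n /= addr0 eqxx.
- by move=> a b; rewrite /ss Hn.
Qed.

End GS.

Section GS2.
Variables (R : realType) (n d : nat) (src tgt : 'I_d -> 'I_n) (r : 'I_d -> R).
Hypothesis Hok : edges_ok src tgt r.
Hypothesis Hc : graph_connected src tgt.
Local Notation Lp := (laplacian src tgt r).
Variables lmin lmax : R.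
Hypothesis Hmin : is_min_nonzero_eig Lp lmin.
Hypothesis Hmax : is_max_eig Lp lmax.

Lemma sc0 : (0%:M : 'M[R]_n) = 0.
Proof. by apply/matrixP => i j; rewrite !mxE mul0rn. Qed.

Lemma lmin_gt0 : 0 < lmin.
Proof.
case: Hmin => H0 Hev _; rewrite lt_def H0 /=.
exact: (@eig_ge0 R n d src tgt r Hok _ Hev).
Qed.

Lemma ss_ge0 m (y : 'cV[R]_m) : 0 <= ss y.
Proof. by rewrite /ss mxE sumr_ge0 // => i _; rewrite mxE -expr2 sqr_ge0. Qed.

Lemma F1 (u : 'cV[R]_n) : \sum_k u k 0 = 0 -> lmin ^+ 2 * ss u <= ss (Lp *m u).
Proof.
move=> Hu; have [c [dd [Hc0 Hcd Hs]]] := @graph_spec R n d src tgt r Hok Hc _ _ Hmin Hmax _ Hu.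
have -> : ss u = ss ((1%:M + 0 *: Lp) *m u) by rewrite scale0r addr0 mul1mx.
have -> : ss (Lp *m u) = ss ((0%:M + 1 *: Lp) *m u) by rewrite scale1r sc0 add0r.
rewrite !Hs mulr_sumr; apply: ler_sum => i _.
rewrite mul0r addr0 expr1n mulr1 add0r mul1r mulrC.
have [->|ci] := eqVneq (c i) 0; first by rewrite !mul0r.
apply: ler_wpM2l => //; have /andP [h1 _] := Hcd i ci.
have l0 := ltW lmin_gt0.
by rewrite !expr2 ler_pM.
Qed.

Lemma F2 (delta : R) (y : 'cV[R]_n) : 0 < delta -> lmax <= delta^-1 ->
  \sum_k y k 0 = 0 ->
  ss ((1%:M - delta *: Lp) *m y) <= (1 - delta * lmin) ^+ 2 * ss y.
Proof.
move=> Hd Hl Hy; have [c [dd [Hc0 Hcd Hs]]] := @graph_spec R n d src tgt r Hok Hc _ _ Hmin Hmax _ Hy.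
have -> : ss y = ss ((1%:M + 0 *: Lp) *m y) by rewrite scale0r addr0 mul1mx.
rewrite -scaleNr !Hs mulr_sumr; apply: ler_sum => i _.
rewrite mul0r addr0 expr1n mulr1 mulrC.
have [->|ci] := eqVneq (c i) 0; first by rewrite !mulr0.
apply: ler_wpM2r => //; have /andP [h1 h2] := Hcd i ci.
have A1 : 0 <= 1 + - delta * dd i.
  rewrite mulNr subr_ge0 -(mulfV (lt0r_neq0 Hd)) ler_pM2l //.
  exact: le_trans h2 Hl.
have A2 : 1 + - delta * dd i <= 1 - delta * lmin.
  by rewrite mulNr lerD2l lerN2 ler_pM2l.
by rewrite !expr2 ler_pM.
Qed.

End GS2.

Section TF.
Variables (R : realType) (m L : nat) (delta : R).
Local Notation N := m.+1.

Definition WVm : 'M[R]_(N + N + N) := block_mx (block_mx 1%:M 0 0 0) 0 0 1%:M.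
Definition WKm : 'M[R]_(N + N + N) := block_mx (block_mx 0 0 1%:M 0) 0 0 0.
Definition Kc (k : nat) : 'M[R]_N :=
  if k == L.-1 then - (delta / N%:R) *: const_mx 1 else 0.
Definition WRm (k : nat) : 'M[R]_(N + N + N) :=
  block_mx (block_mx (- 1%:M) 0 0 0) 0 (row_mx 0 (Kc k)) 0.

Lemma layerE k (X Cc : 'M[R]_N) :
  tf_layer WVm 1%:M WKm (WRm k) (col_mx (col_mx X 1%:M) Cc)
  = col_mx (col_mx (X *m X) 1%:M) (Cc + Cc *m X + Kc k).
Proof.
rewrite /tf_layer trmx1 mulmx1 -!mulmxA.
have -> : WKm *m col_mx (col_mx X 1%:M) Cc = col_mx (col_mx 0 X) 0.
  by rewrite /WKm !mul_block_col !mul0mx !mul1mx ?addr0 ?add0r.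
have -> : (col_mx (col_mx X 1%:M) Cc)^T *m col_mx (col_mx 0 X) 0 = X.
  by rewrite !tr_col_mx !mul_row_col !mulmx0 trmx1 mul1mx ?addr0 ?add0r.
rewrite mulmxA.
have -> : WVm *m col_mx (col_mx X 1%:M) Cc = col_mx (col_mx X 0) Cc.
  by rewrite /WVm !mul_block_col !mul0mx !mul1mx ?addr0 ?add0r.
have -> : WRm k *m col_mx (col_mx X 1%:M) Cc = col_mx (col_mx (- X) 0) (Kc k).
  rewrite /WRm !mul_block_col !mul0mx !mul_row_col !mul0mx !mulmx1 ?addr0 ?add0r.
  by rewrite mulNmx mul1mx.
by rewrite !mul_col_mx mul0mx !add_col_mx !addr0 addrAC subrr add0r.
Qed.


Lemma sum_double (X : 'M[R]_N) t :
  \sum_(k < t) X ^+ k + (\sum_(k < t) X ^+ k) *m X ^+ t = \sum_(k < t + t) X ^+ k.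
Proof.
rewrite big_split_ord /=; congr (_ + _); rewrite mulmxE mulr_suml.
by apply: eq_bigr => i _; rewrite -exprD addnC.
Qed.

Definition TFo (l : nat) (Z : 'M[R]_(N + N + N, N)) :=
  tf (fun=> WVm) (fun=> 1%:M) (fun=> WKm) WRm l Z.

Lemma tf_inv (X0 : 'M[R]_N) l : (l <= L.-1)%N ->
  TFo l (col_mx (col_mx X0 1%:M) (delta *: 1%:M)) =
  col_mx (col_mx (X0 ^+ (2 ^ l)) 1%:M) (delta *: \sum_(k < 2 ^ l) X0 ^+ k).
Proof.
elim: l => [|l IH] Hl.
  by rewrite /TFo /= expr1 big_ord1 expr0.
rewrite /TFo /= -/(TFo l _) IH ?(ltnW Hl) // layerE.
have -> : Kc l = 0 by rewrite /Kc ifF //; apply/negbTE; rewrite neq_ltn Hl.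
rewrite addr0; congr col_mx.
  by congr (col_mx _ _); rewrite mulmxE -exprD addnn -mul2n -expnS.
by rewrite -scalemxAl -scalerDr sum_double addnn -mul2n -expnS.
Qed.

Lemma tf_out (X0 : 'M[R]_N) : (1 <= L)%N ->
  dsubmx (TFo L (col_mx (col_mx X0 1%:M) (delta *: 1%:M))) =
  delta *: \sum_(k < 2 ^ L) X0 ^+ k - (delta / N%:R) *: const_mx 1.
Proof.
move=> HL; have E : L = L.-1.+1 by rewrite prednK.
have -> : forall Z, TFo L Z = TFo L.-1.+1 Z by move=> Z; rewrite -E.
rewrite /TFo /= -/(TFo L.-1 _) tf_inv // layerE col_mxKd.
rewrite /Kc eqxx scaleNr -scalemxAl -scalerDr sum_double addnn -mul2n -expnS.
by rewrite -E.
Qed.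

End TF.

Section Main.
Variables (R : realType) (m d : nat) (src tgt : 'I_d -> 'I_m.+1) (r : 'I_d -> R).
Hypothesis Hok : edges_ok src tgt r.
Hypothesis Hc : graph_connected src tgt.
Local Notation N := m.+1.
Local Notation Lp := (laplacian src tgt r).
Local Notation J := (const_mx 1 : 'M[R]_N).
Variable delta : R.
Hypothesis Hd : 0 < delta.

Definition Qm : 'M[R]_N := N%:R^-1 *: J.
Definition Bm : 'M[R]_N := 1%:M - delta *: Lp.

Lemma N0 : N%:R != 0 :> R.
Proof. by rewrite pnatr_eq0. Qed.

Lemma JJ : J *m J = N%:R *: J.
Proof.
apply/matrixP => i j; rewrite !mxE.
under eq_bigr do rewrite !mxE mulr1.
by rewrite sumr_const card_ord mulr1.
Qed.

Lemma QQ : Qm *m Qm = Qm.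
Proof.
rewrite /Qm -scalemxAl -scalemxAr JJ scalerA scalerA mulrAC mulVf ?N0 //.
by rewrite mul1r.
Qed.

Lemma QL : Qm *m Lp = 0.
Proof. by rewrite /Qm -scalemxAl (@JL R N d src tgt r Hok) scaler0. Qed.
Lemma LQ : Lp *m Qm = 0.
Proof. by rewrite /Qm -scalemxAr (@LJ R N d src tgt r Hok) scaler0. Qed.
Lemma QB : Qm *m Bm = Qm.
Proof. by rewrite /Bm mulmxBr mulmx1 -scalemxAr QL scaler0 subr0. Qed.
Lemma BQ : Bm *m Qm = Qm.
Proof. by rewrite /Bm mulmxBl mul1mx -scalemxAl LQ scaler0 subr0. Qed.
Lemma QT : Qm^T = Qm.
Proof. by rewrite /Qm linearZ /= trmx_const. Qed.


Definition X0m : 'M[R]_N := (Ihat R N - delta *: Lp)^T.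

Lemma X0E : X0m = Bm - Qm.
Proof.
rewrite /X0m /Ihat linearB /= !linearZ /= linearD /= !linearZ /= !linearN /= trmx_const tr_scalar_mx (@lap_sym R N d src tgt r) /Qm /Bm.
by rewrite addrAC.
Qed.

Lemma QQr : Qm * Qm = Qm. Proof. by move: QQ; rewrite mulmxE. Qed.
Lemma LQr : Lp * Qm = 0. Proof. by move: LQ; rewrite mulmxE. Qed.
Lemma BQr : Bm * Qm = Qm. Proof. by move: BQ; rewrite mulmxE. Qed.
Lemma QBr : Qm * Bm = Qm. Proof. by move: QB; rewrite mulmxE. Qed.

Lemma BkQ k : Bm ^+ k * Qm = Qm.
Proof. by elim: k => [|k IH]; rewrite ?expr0 ?mul1r // exprSr -mulrA BQr. Qed.
Lemma QBk k : Qm * Bm ^+ k = Qm.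
Proof. by elim: k => [|k IH]; rewrite ?expr0 ?mulr1 // exprS mulrA QBr. Qed.

Lemma pX k : X0m ^+ k.+1 = Bm ^+ k.+1 - Qm.
Proof.
elim: k => [|k IH]; first by rewrite !expr1 X0E.
rewrite exprS IH X0E mulrBl !mulrBr -exprS BQr QBk QQr.
by rewrite subrr subr0.
Qed.

Lemma LXk k : Lp * X0m ^+ k = Lp * Bm ^+ k.
Proof. by case: k => [|k]; rewrite ?expr0 // pX mulrBr LQr subr0. Qed.
Lemma XkQ k : X0m ^+ k.+1 * Qm = 0.
Proof. by rewrite pX mulrBl BkQ QQr subrr. Qed.
Lemma QXk k : Qm * X0m ^+ k.+1 = 0.
Proof. by rewrite pX mulrBr QBk QQr subrr. Qed.

Definition Om t : 'M[R]_N :=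
  delta *: \sum_(k < t.+1) X0m ^+ k - (delta / N%:R) *: J.

Lemma OmE t : Om t = delta *: \sum_(k < t.+1) X0m ^+ k - delta *: Qm.
Proof. by rewrite /Om /Qm scalerA. Qed.

Lemma OQ t : Om t * Qm = 0.
Proof.
rewrite OmE mulrBl -(scalerAl delta Qm Qm) -scalerAl mulr_suml big_ord_recl expr0 mul1r.
rewrite big1 ?addr0 ?QQr ?subrr // => i _; exact: XkQ.
Qed.

Lemma QO t : Qm * Om t = 0.
Proof.
rewrite OmE mulrBr -(scalerAr delta Qm Qm) -scalerAr mulr_sumr big_ord_recl expr0 mulr1.
rewrite big1 ?addr0 ?QQr ?subrr // => i _; exact: QXk.
Qed.

Lemma LO t : Lp * Om t = 1 - Bm ^+ t.+1.
Proof.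
rewrite OmE mulrBr -(scalerAr delta Lp Qm) LQr scaler0 subr0 -scalerAr mulr_sumr.
under eq_bigr do rewrite LXk.
rewrite -mulr_sumr scalerAl.
have -> : delta *: Lp = 1 - Bm by rewrite /Bm opprB addrC subrK.
by rewrite -opprB mulNr -subrX1 opprB.
Qed.


Lemma Qentry (v : 'cV[R]_N) i : (Qm *m v) i 0 = N%:R^-1 * \sum_k v k 0.
Proof.
rewrite mxE mulr_sumr; apply: eq_bigr => k _.
by rewrite /Qm !mxE mulr1.
Qed.

Lemma sumQ (v : 'cV[R]_N) : Qm *m v = 0 -> \sum_k v k 0 = 0.
Proof.
move/matrixP => /(_ 0 0); rewrite Qentry mxE => /eqP.
by rewrite mulf_eq0 invr_eq0 (negbTE N0) => /eqP.
Qed.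

Variable Ldag : 'M[R]_N.
Hypothesis Hp : is_pinv Lp Ldag.
Local Notation Lsym := (@lap_sym R N d src tgt r).

Lemma DQ : Ldag *m Qm = 0.
Proof.
case: Hp => _ P2 P3 _.
have E : Ldag = Ldag *m Ldag^T *m Lp.
  by rewrite -{1}P2 -mulmxA -P3 trmx_mul Lsym mulmxA.
by rewrite E -mulmxA LQ mulmx0.
Qed.

Lemma QD : Qm *m Ldag = 0.
Proof.
case: Hp => _ P2 _ P4.
have E : Ldag = Lp *m Ldag^T *m Ldag.
  by rewrite -{1}P2 -P4 trmx_mul Lsym.
by rewrite E mulmxA (mulmxA Qm Lp) QL !mul0mx.
Qed.

Lemma LLD : Lp *m (Lp *m Ldag) = Lp.
Proof.
case: Hp => P1 _ P3 _.
rewrite -P3 trmx_mul Lsym mulmxA.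
by move: (congr1 trmx P1); rewrite trmx_mul Lsym trmx_mul Lsym mulmxA.
Qed.

Lemma LLy (y : 'cV[R]_N) : Qm *m y = 0 -> Lp *m (Ldag *m y) = y.
Proof.
move=> Qy; set v := y - Lp *m (Ldag *m y).
have Lv : Lp *m v = 0 by rewrite /v mulmxBr (mulmxA Lp Ldag y) (mulmxA Lp (Lp *m Ldag) y) LLD subrr.
have vL : v^T *m Lp = 0 by rewrite -Lsym -trmx_mul Lv trmx0.
have Hk := @ker_const R N d src tgt r Hok Hc _ vL.
have Qv : Qm *m v = 0 by rewrite /v mulmxBr Qy (mulmxA Qm Lp) QL mul0mx subrr.
suff : v = 0 by move/eqP; rewrite subr_eq0 => /eqP <-.
clearbody v; apply/matrixP => i j; rewrite ord1 mxE.
have := Qentry v i; rewrite Qv mxE.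
have Hk' a b : v a 0 = v b 0 by have := Hk a b; rewrite !mxE.
under eq_bigr => k _ do rewrite (Hk' k i).
rewrite sumr_const card_ord mulrnAr -mulrnAl -mulr_natr mulVf ?N0 // mul1r.
by move=> ->.
Qed.


Lemma ss_add (a b : 'cV[R]_N) : a^T *m b = 0 -> ss (a + b) = ss a + ss b.
Proof.
move=> H; have H' : b^T *m a = 0 by rewrite -[a]trmxK -trmx_mul H trmx0.
have tD : (a + b)^T = a^T + b^T by apply/matrixP => i j; rewrite !mxE.
rewrite /ss tD mulmxDl !mulmxDr H H' addr0 add0r mxE.
by [].
Qed.

Lemma ss_opp (a : 'cV[R]_N) : ss (- a) = ss a.
Proof.
have tN : (- a)^T = - a^T by apply/matrixP => i j; rewrite !mxE.
by rewrite /ss tN mulNmx mulmxN opprK. Qed.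

Variables lmin lmax : R.
Hypothesis Hmin : is_min_nonzero_eig Lp lmin.
Hypothesis Hmax : is_max_eig Lp lmax.
Hypothesis Hl : lmax <= delta^-1.

Lemma Bpow_bound t (y : 'cV[R]_N) : Qm *m y = 0 ->
  ss (Bm ^+ t *m y) <= ((1 - delta * lmin) ^+ 2) ^+ t * ss y.
Proof.
move=> Qy; elim: t => [|t IH]; first by rewrite expr0 mul1mx expr0 mul1r.
have -> : Bm ^+ t.+1 *m y = Bm *m (Bm ^+ t *m y) by rewrite exprS mulmxA.
have Hs : \sum_k (Bm ^+ t *m y) k 0 = 0.
  by apply: sumQ; rewrite mulmxA mulmxE QBk Qy.
apply: le_trans (@F2 R N d src tgt r Hok Hc lmin lmax Hmin Hmax delta _ Hd Hl Hs) _.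
by rewrite (exprS (_ ^+ 2) t) -mulrA; apply: ler_wpM2l => //; apply: sqr_ge0.
Qed.

Lemma main_bound (x : 'cV[R]_N) t :
  lmin ^+ 2 * ss ((Om t - Ldag) *m x) <= ((1 - delta * lmin) ^+ 2) ^+ t.+1 * ss x.
Proof.
set E := Om t - Ldag.
set y := x - Qm *m x.
have Qy : Qm *m y = 0 by rewrite /y mulmxBr mulmxA QQ subrr.
have EQ : E *m Qm = 0 by rewrite /E mulmxBl DQ subr0 mulmxE OQ.
have QE : Qm *m E = 0 by rewrite /E mulmxBr QD subr0 mulmxE QO.
have Ex : E *m x = E *m y by rewrite /y mulmxBr mulmxA EQ mul0mx subr0.
set u := E *m y.
have Qu : Qm *m u = 0 by rewrite /u mulmxA QE mul0mx.
have Lu : Lp *m u = - (Bm ^+ t.+1 *m y).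
  rewrite /u mulmxA /E (mulmxBr Lp (Om t) Ldag) mulmxE LO -mulmxE.
  rewrite (mulmxBl (1 - Bm ^+ t.+1) (Lp *m Ldag) y) (mulmxBl 1 (Bm ^+ t.+1) y) mul1mx.
  by rewrite -(mulmxA Lp Ldag y) LLy // addrAC subrr add0r.
have F := @F1 R N d src tgt r Hok Hc lmin lmax Hmin Hmax u (@sumQ u Qu).
rewrite Ex; apply: le_trans F _; rewrite Lu ss_opp.
apply: le_trans (@Bpow_bound t.+1 y Qy) _.
apply: ler_wpM2l; first by rewrite exprn_ge0 ?sqr_ge0.
have -> : x = y + Qm *m x by rewrite /y subrK.
rewrite ss_add ?lerDl ?ss_ge0 //.
by rewrite mulmxA -[Qm in y^T *m Qm]QT -trmx_mul Qy trmx0 mul0mx.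
Qed.


End Main.

Lemma vnorm_ss (R : realType) n (y : 'cV[R]_n) : vnorm y = Num.sqrt (ss y).
Proof.
rewrite /vnorm /ss mxE; congr Num.sqrt; apply: eq_bigr => i _.
by rewrite mxE expr2.
Qed.

Theorem lemma4 (R : realType) (n L : nat) (delta : R) :
  (1 <= n)%N -> (1 <= L)%N -> 0 < delta ->
  exists WV WQ WK WR : nat -> 'M[R]_(n + n + n),
    forall (d : nat) (src tgt : 'I_d -> 'I_n) (r : 'I_d -> R),
      edges_ok src tgt r -> graph_connected src tgt ->
      forall (lmin lmax : R) (Ldag : 'M[R]_n),
        is_min_nonzero_eig (laplacian src tgt r) lmin ->
        is_max_eig (laplacian src tgt r) lmax ->
        lmax <= delta^-1 ->
        is_pinv (laplacian src tgt r) Ldag ->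
        spec_norm (dsubmx (tf WV WQ WK WR L (Z0 delta (laplacian src tgt r)))
                   - Ldag)
        <= lmin^-1 * expR (- (delta * 2 ^+ L * lmin)).
Proof.
move=> Hn HL Hd; case: n Hn => [//|m] _.
exists (fun=> WVm R m), (fun=> 1%:M), (fun=> WKm R m), (WRm R m L delta).
move=> d src tgt r Hok Hc lmin lmax Ldag Hmin Hmax Hl Hp.
have tZ : (delta *: 1%:M : 'M[R]_m.+1)^T = delta *: 1%:M.
  by apply/matrixP => i j; rewrite !mxE eq_sym.
set t := (2 ^ L).-1.
have Ht : (2 ^ L = t.+1)%N by rewrite /t prednK // expn_gt0.
have -> : tf (fun=> WVm R m) (fun=> 1%:M) (fun=> WKm R m) (WRm R m L delta) L
    (Z0 delta (laplacian src tgt r)) =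
  TFo R m L delta L (col_mx (col_mx (X0m R m d src tgt r delta) 1%:M) (delta *: 1%:M)).
  by rewrite /Z0 tZ.
rewrite tf_out // Ht -/(Om R m d src tgt r delta t).
set E := Om R m d src tgt r delta t - Ldag.
have l0 := @lmin_gt0 _ _ _ _ _ _ Hok _ Hmin.
have lmm : lmin <= lmax.
  by case: Hmax => _ H; apply: H; case: Hmin.
have c0 : 0 <= 1 - delta * lmin.
  rewrite subr_ge0 -(mulfV (lt0r_neq0 Hd)) ler_pM2l //.
  exact: le_trans lmm Hl.
set K := lmin^-1 * (1 - delta * lmin) ^+ t.+1.
have K0 : 0 <= K by rewrite /K; apply: mulr_ge0; [rewrite invr_ge0 ltW | apply: exprn_ge0].
have HK : K <= lmin^-1 * expR (- (delta * 2 ^+ L * lmin)).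
  rewrite /K; apply: ler_wpM2l; first by rewrite invr_ge0 ltW.
  have -> : - (delta * 2 ^+ L * lmin) = (- (delta * lmin)) * (t.+1)%:R.
    by rewrite -Ht natrX mulrAC mulNr.
  rewrite expRM_natr; apply: lerXn2r; rewrite ?nnegrE ?expR_ge0 //.
  exact: expR_ge1Dx.
apply: le_trans HK; rewrite /spec_norm; apply: ge_sup.
  exists (vnorm (E *m delta_mx 0 0)), (delta_mx 0 0) => //=.
  rewrite /vnorm (bigD1 0) //= big1 => [|i /negbTE ni]; last first.
    by rewrite mxE ni /= expr0n.
  by rewrite mxE eqxx /= expr1n addr0 sqrtr1.
move=> z [x /= Hx <-].
have sx : ss x = 1.
  by move: Hx; rewrite vnorm_ss => /(congr1 (fun v => v ^+ 2)); rewrite sqr_sqrtr ?ss_ge0 // expr1n.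
have MB := @main_bound _ _ _ _ _ _ Hok Hc _ Hd _ Hp _ _ Hmin Hmax Hl x t.
rewrite sx mulr1 in MB.
rewrite vnorm_ss -(ger0_norm K0) -sqrtr_sqr ler_wsqrtr //.
rewrite /K exprMn exprVn -exprM mulnC exprM.
by rewrite ler_pdivlMl ?exprn_gt0.
Qed.
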